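(* Let $\beta>0$, $\tilde\lambda\in(0,1]$, $\mathcal{L}\ge 0$, $x\ge 0$, $y\le 0$, $z\ge 0$. For $\Delta>y$ let $p^D(\Delta)=\frac{x}{\Delta-y}$, and say that $\Delta$ satisfies the leverage constraint if $\Delta>y$ and $$\beta(\mathcal{L}+\Delta)\le \tilde\lambda\Big(z+\Delta\,p^D(\Delta)\Big).$$ Consider the quadratic polynomial in $\Delta$ $$-\beta \Delta^2 + \Delta\Big( \tilde \lambda (z+x) - \beta(\mathcal{L} - y)\Big) - \tilde\lambda zy + \beta\mathcal{L} y .$$ If its roots are real, denote them $\Delta_{\min}\le\Delta_{\max}$; then the set of $\Delta$ satisfying the leverage constraint is $[\Delta_{\min},\Delta_{\max}]\cap(y,\infty)$. If its roots are not real, then no $\Delta$ satisfies the leverage constraint.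
   Context: Single period $t$ of a stablecoin market model. A speculator owes $\mathcal{L}=\mathcal{L}_{t-1}$ stablecoins and holds Ether worth $z=n_{t-1}p^E_t$ dollars; $x=w^D\bar n_{t-1}p^E_t\ge0$ is the new dollar stablecoin demand from the stablecoin holder and $y=w^D\bar m_{t-1}-\mathcal{L}_{t-1}\le 0$ (so $|y|$ is the ''free supply''). The speculator changes the stablecoin supply by $\Delta$ (new supply $\mathcal{L}+\Delta$), and for $\Delta>y$ the stablecoin market clears at dollar price $p^D(\Delta)=x/(\Delta-y)$; the speculator's assets after the trade are worth $z+\Delta p^D(\Delta)$. Its leverage is $\lambda=\beta\cdot\text{liabilities}/\text{assets}=\beta(\mathcal{L}+\Delta)/(z+\Delta p^D(\Delta))$, where $\beta$ is the collateral liquidation threshold, and the leverage constraint is $\lambda\le\tilde\lambda$ (the case $\tilde\lambda=1$ being the protocol's liquidation constraint). *)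

(* Defs.v *)
From mathcomp Require Import all_boot all_order all_algebra.
From mathcomp Require Import reals.
Set Implicit Arguments. Unset Strict Implicit. Unset Printing Implicit Defensive.
Import Order.TTheory GRing.Theory Num.Theory.
Local Open Scope ring_scope.

Definition pD (R : realType) (x y Delta : R) : R := x / (Delta - y).

Definition leverage_ok (R : realType) (beta lt L x y z Delta : R) : Prop :=
  y < Delta /\ beta * (L + Delta) <= lt * (z + Delta * pD x y Delta).

Definition levpoly (R : realType) (beta lt L x y z : R) : {poly R} :=
  (- beta) *: 'X^2 + (lt * (z + x) - beta * (L - y)) *: 'X
  + (- (lt * z * y) + beta * L * y)%:P.

(* Main.v *)
Require Import Defs.
From mathcomp Require Import all_boot all_order all_algebra.
From mathcomp Require Import reals ring lra.
Import Order.TTheory GRing.Theory Num.Theory.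
Local Open Scope ring_scope.
Lemma hornP (R : realType) (beta lt L x y z D : R) :
  (levpoly beta lt L x y z).[D] = - beta * D^+2 + (lt * (z + x) - beta * (L - y)) * D + (- (lt * z * y) + beta * L * y).
Proof. by rewrite /levpoly !hornerE. Qed.
Lemma levP (R : realType) (beta lt L x y z D : R) : y < D ->
  leverage_ok beta lt L x y z D <-> 0 <= (levpoly beta lt L x y z).[D].
Proof.
move=> hD; have hp : 0 < D - y by rewrite subr_gt0.
have E : (lt * (z + D * pD x y D) - beta * (L + D)) * (D - y) = (levpoly beta lt L x y z).[D].
  rewrite hornP /pD; field; by rewrite gt_eqF.
rewrite /leverage_ok -E pmulr_lge0 // subr_ge0; split; [by case|by split].
Qed.

Theorem proposition3p1 (R : realType) (beta lt L x y z : R)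
  (hbeta : 0 < beta) (hlt0 : 0 < lt) (hlt1 : lt <= 1)
  (hL : 0 <= L) (hx : 0 <= x) (hy : y <= 0) (hz : 0 <= z) :
  (forall dmin dmax : R, dmin <= dmax ->
     levpoly beta lt L x y z = (- beta) *: (('X - dmin%:P) * ('X - dmax%:P)) ->
     forall Delta : R,
       leverage_ok beta lt L x y z Delta <->
       (dmin <= Delta /\ Delta <= dmax /\ y < Delta))
  /\
  ((forall r : R, ~~ root (levpoly beta lt L x y z) r) ->
     forall Delta : R, ~ leverage_ok beta lt L x y z Delta).
Proof.
split.
  move=> dmin dmax hd E D.
  have HP : (levpoly beta lt L x y z).[D] = - beta * ((D - dmin) * (D - dmax)).
    by rewrite E !hornerE.
  split.
    move=> hok; have hyD : y < D by case: hok.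
    move/(@levP R beta lt L x y z D hyD): hok; rewrite HP => h.
    have h2 : (D - dmin) * (D - dmax) <= 0.
      by rewrite mulNr oppr_ge0 pmulr_rle0 in h.
    split; [|split=>//]; nra.
  case=> h1 [h2 h3]; apply/(@levP R beta lt L x y z D h3); rewrite HP.
  rewrite mulNr oppr_ge0 pmulr_rle0 //; nra.
move=> nor D hok; have hyD : y < D by case: hok.
move/(@levP R beta lt L x y z D hyD): hok => h.
set b := lt * (z + x) - beta * (L - y).
set c := - (lt * z * y) + beta * L * y.
have HP : forall t, (levpoly beta lt L x y z).[t] = - beta * t^+2 + b * t + c.
  by move=> t; rewrite hornP.
set m := b / (2 * beta).
have Hm : (levpoly beta lt L x y z).[m] - (levpoly beta lt L x y z).[D] = beta * (D - m)^+2.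
  rewrite !HP /m; field; by rewrite gt_eqF.
set q := (levpoly beta lt L x y z).[m].
have hq : 0 <= q / beta.
  apply: divr_ge0; last exact: ltW.
  have : 0 <= beta * (D - m)^+2 by apply: mulr_ge0; [exact: ltW| exact: sqr_ge0].
  rewrite -Hm /q; lra.
have := nor (m + Num.sqrt (q / beta)); rewrite /root; move/eqP; apply.
have Hs := sqr_sqrtr hq.
rewrite HP.
have -> : - beta * (m + Num.sqrt (q / beta)) ^+ 2 + b * (m + Num.sqrt (q / beta)) + c
   = (- beta * m ^+ 2 + b * m + c) - beta * (Num.sqrt (q / beta))^+2.
  rewrite /m; field; by rewrite gt_eqF.
rewrite Hs -HP -/q; field; by rewrite gt_eqF.
Qed.
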